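(* In the setting below, the subgroup $S'\le S$ is strongly closed in the fusion system $\mathcal{F}_\Delta(\mathbb{T})$: for every $P\le S$ and every morphism $f\in\mathrm{Hom}_{\mathcal{F}_\Delta(\mathbb{T})}(P,S)$ one has $f(P\cap S')\le S'$.
   Context: Setting (isotypical extension of localities). A locality $(\mathbb{L},\Delta,S)$ consists of a finite partial group $\mathbb{L}$ (viewed as the simplicial set of words $[x_1|\dots|x_n]$ in the domain of the product), a $p$-subgroup $S$ and a set $\Delta$ of subgroups of $S$ with $S\in\Delta$, such that: (O1) a word $[u_1|\dots|u_n]$ is a simplex iff there are $X_0,\dots,X_n\in\Delta$ with ${}^{u_i}X_i=X_{i-1}$, where ${}^{u}X=\{uxu^{-1}\}$; (O2) if $X,Z\in\Delta$, $Y\le Z$ and ${}^{u}X\le Y$ then $N_Y({}^uX)\in\Delta$; (L2) $S$ is maximal among $p$-subgroups. Let $(\mathbb{L}',\Delta',S')$, $(\mathbb{L}'',\Delta'',S'')$ be localities, $\mathrm{Aut}(\mathbb{L}';S')$ the automorphisms of $\mathbb{L}'$ preserving $S'$, with $\Delta'$ invariant under it. An isotypical extension $\mathbb{L}'\to\mathbb{L}\xrightarrow{\tau}\mathbb{L}''$ is given by $\Psi_g\in\mathrm{Aut}(\mathbb{L}';S')$ ($[g]\in\mathbb{L}''_1$) and $\eta(g,h)\in N_{\mathbb{L}'}(S')$ ($[g|h]\in\mathbb{L}''_2$) with $\Psi_1=\mathrm{Id}$, $\eta(1,h)=\eta(g,1)=1$, $\eta(g,h)\Psi_{gh}(x)\eta(g,h)^{-1}=\Psi_g\Psi_h(x)$,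 $\Psi_g(\eta(h,k))\eta(g,hk)=\eta(g,h)\eta(gh,k)$; $\mathbb{L}$ has elements $(x,g)$, simplices $[(x_1,g_1)|\dots|(x_n,g_n)]$ with $[g_1|\dots|g_n]\in\mathbb{L}''$ and $[x_1|\Psi_{g_1}(x_2)|\dots|\Psi_{g_1}\cdots\Psi_{g_{n-1}}(x_n)]\in\mathbb{L}'$, product $(x_1,g_1)(x_2,g_2)=(x_1\Psi_{g_1}(x_2)\eta(g_1,g_2),g_1g_2)$, inverse $(x,g)^{-1}=(\eta(g^{-1},g)^{-1}\Psi_{g^{-1}}(x^{-1}),g^{-1})$; $\mathbb{L}'\subseteq\mathbb{L}$ via $x\mapsto(x,1)$, $\tau(x,g)=g$. Fix a $p$-subgroup $S\le\mathbb{L}$ on which $\tau$ restricts to an extension $S'\to S\to S''$. $\Delta=\{P\le S: P\cap S'\in\Delta',\ \tau(P)\in\Delta''\}$; $\mathbb{T}$ is the set of words $[u_1|\dots|u_n]$ in $\mathbb{L}_1$ admitting $H_0,\dots,H_n\in\Delta$ with ${}^{u_i}H_i=H_{i-1}$; $(\mathbb{T},\Delta,S)$ is a locality, and $\mathcal{F}_\Delta(\mathbb{T})$ is the fusion system over $S$ generated by restrictions of conjugation maps $c_u\colon X\to Y$, $X,Y\in\Delta$, $u\in\mathbb{T}$. *)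

(* Defs.v *)
From HB Require Import structures.
From mathcomp Require Import all_boot.

Set Implicit Arguments.
Unset Strict Implicit.
Unset Printing Implicit Defensive.

(* Finite partial groups (Chermak), given by a finite carrier T, a     *)
(* domain D of words, a (total) product Pi : seq T -> T whose values   *)
(* only matter on D, and an inversion inv.                             *)
Section PartialGroup.
Variables (T : finType) (D : pred (seq T)) (Pi : seq T -> T) (inv : T -> T).

Definition pg_one : T := Pi [::].

Definition partial_group : Prop :=
  [/\ forall x, D [:: x],
      forall u v, D (u ++ v) -> D u /\ D v,
      forall x, Pi [:: x] = x &
      forall u v w, D (u ++ v ++ w) ->
        D (u ++ Pi v :: w) /\ Pi (u ++ v ++ w) = Pi (u ++ Pi v :: w)] /\
  [/\ involutive inv &
      forall w, D w -> D (rev (map inv w) ++ w) /\ Pi (rev (map inv w) ++ w) = pg_one].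

Definition pg_subgroup (H : {set T}) : Prop :=
  (forall x, x \in H -> inv x \in H) /\
  (forall w : seq T, all (fun x => x \in H) w -> D w /\ Pi w \in H).

Definition pg_p_subgroup (p : nat) (H : {set T}) : Prop :=
  pg_subgroup H /\ p.-nat #|H|.

Definition conjw (u x : T) : T := Pi [:: u; x; inv u].
Definition conj_defined (u : T) (X : {set T}) : bool :=
  [forall x in X, D [:: u; x; inv u]].
Definition conj_set (u : T) (X : {set T}) : {set T} := [set conjw u x | x in X].
Definition conj_to (u : T) (X Y : {set T}) : bool :=
  conj_defined u X && (conj_set u X == Y).

Definition pg_normalizer (Y W : {set T}) : {set T} := [set y in Y | conj_to y W W].

Definition Delta_word (Delta : {set T} -> Prop) (w : seq T) : Prop :=
  exists Xs : seq {set T},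
    [/\ size Xs = (size w).+1,
        forall i, i < size Xs -> Delta (nth set0 Xs i) &
        forall i, i < size w -> conj_to (nth pg_one w i) (nth set0 Xs i.+1) (nth set0 Xs i)].

Definition locality (p : nat) (S : {set T}) (Delta : {set T} -> Prop) : Prop :=
  [/\ partial_group,
      pg_p_subgroup p S,
      Delta S &
      forall X, Delta X -> pg_subgroup X /\ X \subset S] /\
  [/\
      forall w, (D w <-> Delta_word Delta w),
      (forall X Z Y u, Delta X -> Delta Z -> pg_subgroup Y -> Y \subset Z ->
         conj_defined u X -> conj_set u X \subset Y ->
         Delta (pg_normalizer Y (conj_set u X))) &
      forall P, pg_p_subgroup p P -> S \subset P -> P = S].

Definition pg_aut (a : T -> T) : Prop :=
  [/\ bijective a,
      forall w, D (map a w) = D w &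
      forall w, D w -> a (Pi w) = Pi (map a w)].

Definition pg_autS (S : {set T}) (a : T -> T) : Prop := pg_aut a /\ a @: S = S.

(* fusion system over S generated by the restrictions of the conjugation *)
(* maps c_u : X -> Y with X, Y in Delta and u an element (one-letter    *)
(* word) of Tel.  A morphism is recorded as a pair (P, f) with f a map   *)
(* P -> S (values of f outside P are irrelevant).                       *)
Inductive gen_fusion (S : {set T}) (Delta : {set T} -> Prop) (Tel : T -> Prop)
  : {set T} -> (T -> T) -> Prop :=
| gf_conj X Y u : Delta X -> Delta Y -> Tel u -> conj_defined u X ->
    conj_set u X \subset Y -> gen_fusion S Delta Tel X (conjw u)
| gf_inner P s : s \in S -> pg_subgroup P -> P \subset S ->
    gen_fusion S Delta Tel P (conjw s)
| gf_res P R f : gen_fusion S Delta Tel P f -> pg_subgroup R -> R \subset P ->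
    gen_fusion S Delta Tel R f
| gf_comp P Q f g : gen_fusion S Delta Tel P f -> gen_fusion S Delta Tel Q g ->
    f @: P \subset Q -> gen_fusion S Delta Tel P (g \o f)
| gf_inv P f g : gen_fusion S Delta Tel P f -> {in P &, injective f} ->
    {in P, cancel f g} -> gen_fusion S Delta Tel (f @: P) g
| gf_ext P f g : gen_fusion S Delta Tel P f -> {in P, f =1 g} ->
    gen_fusion S Delta Tel P g.

End PartialGroup.

Section Isotypical.
Variables (T1 T2 : finType).
Variables (D1 : pred (seq T1)) (Pi1 : seq T1 -> T1) (inv1 : T1 -> T1).
Variables (D2 : pred (seq T2)) (Pi2 : seq T2 -> T2) (inv2 : T2 -> T2).
Variables (Psi : T2 -> T1 -> T1) (eta : T2 -> T2 -> T1).

Local Notation one1 := (pg_one Pi1).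
Local Notation one2 := (pg_one Pi2).

Definition isotypical_data (S1 : {set T1}) : Prop :=
  [/\ forall g, pg_autS D1 Pi1 S1 (Psi g),
      forall x, Psi one2 x = x &
      forall g h, D2 [:: g; h] -> eta g h \in pg_normalizer D1 Pi1 inv1 setT S1] /\
  [/\ forall h, eta one2 h = one1 /\ eta h one2 = one1,
      forall g h x, D2 [:: g; h] ->
        D1 [:: eta g h; Psi (Pi2 [:: g; h]) x; inv1 (eta g h)] /\
        Pi1 [:: eta g h; Psi (Pi2 [:: g; h]) x; inv1 (eta g h)] = Psi g (Psi h x) &
      forall g h k, D2 [:: g; h; k] ->
        Pi1 [:: Psi g (eta h k); eta g (Pi2 [:: h; k])] =
        Pi1 [:: eta g h; eta (Pi2 [:: g; h]) k]].

Fixpoint ext_tw (w : seq (T1 * T2)) : seq T1 :=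
  match w with
  | [::] => [::]
  | a :: w' => a.1 :: map (Psi a.2) (ext_tw w')
  end.

Definition ext_D : pred (seq (T1 * T2)) :=
  fun w => D2 (map snd w) && D1 (ext_tw w).

Definition ext_prod2 (a b : T1 * T2) : T1 * T2 :=
  (Pi1 [:: a.1; Psi a.2 b.1; eta a.2 b.2], Pi2 [:: a.2; b.2]).

(* n-fold product (well defined on ext_D by associativity) *)
Definition ext_Pi (w : seq (T1 * T2)) : T1 * T2 :=
  foldr ext_prod2 (one1, one2) w.

Definition ext_inv (a : T1 * T2) : T1 * T2 :=
  (Pi1 [:: inv1 (eta (inv2 a.2) a.2); Psi (inv2 a.2) (inv1 a.1)], inv2 a.2).

(* Delta = { P <= S : P cap S' in Delta', tau(P) in Delta'' } *)
Definition ext_Delta (Delta1 : {set T1} -> Prop) (Delta2 : {set T2} -> Prop)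
  (S : {set T1 * T2}) (P : {set T1 * T2}) : Prop :=
  [/\ pg_subgroup ext_D ext_Pi ext_inv P, P \subset S,
      Delta1 [set x | (x, one2) \in P] &
      Delta2 [set a.2 | a in P]].

Definition ext_Tel Delta1 Delta2 S (u : T1 * T2) : Prop :=
  Delta_word ext_D ext_Pi ext_inv (ext_Delta Delta1 Delta2 S) [:: u].

Definition ext_fusion Delta1 Delta2 S : {set T1 * T2} -> (T1 * T2 -> T1 * T2) -> Prop :=
  gen_fusion ext_D ext_Pi ext_inv S (ext_Delta Delta1 Delta2 S) (ext_Tel Delta1 Delta2 S).

End Isotypical.

(* Main.v *)
Require Import Defs.
From HB Require Import structures.
From mathcomp Require Import all_boot.
Set Warnings "-notation-overridden".
Lemma pg_ins1 {T : finType} {D : pred (seq T)} {Pi : seq T -> T} {inv : T -> T} :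
  partial_group D Pi inv -> forall u w, D (u ++ w) ->
  D (u ++ pg_one Pi :: w) /\ Pi (u ++ w) = Pi (u ++ pg_one Pi :: w).
Proof. by case=> -[_ _ _ H4] _ u w Duw; have := H4 u [::] w Duw. Qed.

Lemma pg_coll {T : finType} {D : pred (seq T)} {Pi : seq T -> T} {inv : T -> T} :
  partial_group D Pi inv -> forall u v w, D (u ++ v ++ w) ->
  D (u ++ Pi v :: w) /\ Pi (u ++ v ++ w) = Pi (u ++ Pi v :: w).
Proof. by case=> -[_ _ _ H4] _. Qed.

Lemma pg_split {T : finType} {D : pred (seq T)} {Pi : seq T -> T} {inv : T -> T} :
  partial_group D Pi inv -> forall u v, D (u ++ v) -> D u /\ D v.
Proof. by case=> -[_ H2 _ _] _. Qed.

Lemma pg_xinv {T : finType} {D : pred (seq T)} {Pi : seq T -> T} {inv : T -> T} :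
  partial_group D Pi inv -> forall x,
  (D [:: x; inv x] /\ Pi [:: x; inv x] = pg_one Pi) /\
  (D [:: inv x; x] /\ Pi [:: inv x; x] = pg_one Pi).
Proof.
case=> -[H1 _ _ _] [Hinv H5] x; split.
  by have := H5 [:: inv x] (H1 _); rewrite /= Hinv.
by have := H5 [:: x] (H1 _).
Qed.

Lemma pg_conj_one {T : finType} {D : pred (seq T)} {Pi : seq T -> T} {inv : T -> T} :
  partial_group D Pi inv -> forall u z, D [:: u; z; inv u] ->
  (Pi [:: u; Pi [:: z; Pi [:: inv u; pg_one Pi]]] = pg_one Pi <-> z = pg_one Pi).
Proof.
move=> pg u z Dw.
have pg' := pg; case: pg' => -[H1 H2 H3 H4] [Hinv H5].
have [[Dui Pui] [Diu Piu]] := pg_xinv pg u.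
have E1 : Pi [:: inv u; pg_one Pi] = inv u.
  by have [_ <-] := pg_ins1 pg [:: inv u] [::] (H1 _); rewrite H3.
rewrite E1.
have [Dw' Ew'] := pg_coll pg [:: u] [:: z; inv u] [::] Dw.
rewrite /= in Dw' Ew'; rewrite -Ew'.
split=> Hz.
-
  have [_ Dzu] := pg_split pg [:: u] [:: z; inv u] Dw.
  have [Dbig _] := H5 _ Dw.
  rewrite /= Hinv in Dbig.
  have [_ DA] := pg_split pg [:: u; inv z] [:: inv u; u; z; inv u] Dbig.
  have [DA1 EA1] := pg_coll pg [:: inv u] [:: u; z; inv u] [::] DA.
  have [DA2 EA2] := pg_coll pg [::] [:: inv u; u] [:: z; inv u] DA.
  rewrite /= Hz E1 in EA1; rewrite /= Piu in EA2.
  have [_ EA3] := pg_coll pg [::] [::] [:: z; inv u] Dzu.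
  rewrite /= in EA3.
  have Ezu : Pi [:: z; inv u] = inv u by rewrite EA3 -EA2 EA1.
  have [Dq _] := pg_split pg [:: u; inv z] [:: inv u; u; z; inv u] Dbig.
  have [Dq2 _] := H5 _ Dq.
  rewrite /= !Hinv in Dq2.
  have [DB _] := pg_split pg [:: z; inv u; u] [:: inv z] Dq2.
  have [_ EB1] := pg_coll pg [:: z] [:: inv u; u] [::] DB.
  have [_ EB2] := pg_coll pg [::] [:: z; inv u] [:: u] DB.
  rewrite /= Piu in EB1; rewrite /= Ezu Piu in EB2.
  have [_ EB3] := pg_ins1 pg [:: z] [::] (H1 _).
  by rewrite -(H3 z) EB3 -EB1 EB2.
- rewrite Hz.
  have [_ <-] := pg_ins1 pg [:: u] [:: inv u] Dui.
  by [].
Qed.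

Lemma fus_inv {T1 T2 : finType}
  {D1 : pred (seq T1)} {Pi1 : seq T1 -> T1} {inv1 : T1 -> T1}
  {Delta1 : {set T1} -> Prop}
  {D2 : pred (seq T2)} {Pi2 : seq T2 -> T2} {inv2 : T2 -> T2}
  {Delta2 : {set T2} -> Prop}
  {Psi : T2 -> T1 -> T1} {eta : T2 -> T2 -> T1}
  {S : {set T1 * T2}} :
  partial_group D2 Pi2 inv2 ->
  pg_subgroup (ext_D D1 D2 Psi) (ext_Pi Pi1 Pi2 Psi eta)
    (ext_inv Pi1 inv1 inv2 Psi eta) S ->
  forall (P : {set T1 * T2}) (f : T1 * T2 -> T1 * T2),
    ext_fusion D1 Pi1 inv1 D2 Pi2 inv2 Psi eta Delta1 Delta2 S P f ->
    forall z, z \in P -> [/\ z \in S, f z \in S &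
       ((f z).2 = pg_one Pi2 <-> z.2 = pg_one Pi2)].
Proof.
move=> pg2 [Sinv Sw].
have key : forall u x, ext_D D1 D2 Psi [:: u; x; ext_inv Pi1 inv1 inv2 Psi eta u] ->
  ((conjw (ext_Pi Pi1 Pi2 Psi eta) (ext_inv Pi1 inv1 inv2 Psi eta) u x).2 = pg_one Pi2
   <-> x.2 = pg_one Pi2).
  move=> u x /andP [Dw _].
  exact: (pg_conj_one pg2 u.2 x.2 Dw).
move=> P f H; elim: H => {P f}.
- move=> X Y u [_ XS _ _] [_ YS _ _] _ cd sub z zX.
  split; first exact: (subsetP XS).
    apply: (subsetP YS); apply: (subsetP sub); exact: imset_f.
  apply: key; by have := forallP cd z; rewrite zX.
- move=> P s sS _ PS z zP.
  have zS := subsetP PS z zP.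
  have [Dw Pw] : ext_D D1 D2 Psi [:: s; z; ext_inv Pi1 inv1 inv2 Psi eta s] /\
     ext_Pi Pi1 Pi2 Psi eta [:: s; z; ext_inv Pi1 inv1 inv2 Psi eta s] \in S.
    by apply: Sw; rewrite /= sS zS Sinv.
  by split=> //; apply: key.
- move=> P R f _ IH _ RP z zR; exact: IH (subsetP RP z zR).
- move=> P Q f g _ IHf _ IHg sub z zP.
  have [zS fzS Ef] := IHf z zP.
  have fzQ : f z \in Q by apply: (subsetP sub); exact: imset_f.
  have [_ gS Eg] := IHg _ fzQ.
  split=> //=; exact: iff_trans Eg Ef.
- move=> P f g _ IH _ can y /imsetP [z zP ->].
  have [zS fzS Ef] := IH z zP.
  by rewrite (can z zP); split=> //; apply: iff_sym.
- move=> P f g _ IH e z zP; rewrite -(e z zP); exact: IH.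
Qed.

Theorem corollary7p7 (p : nat) (T1 T2 : finType)
  {D1 : pred (seq T1)} {Pi1 : seq T1 -> T1} {inv1 : T1 -> T1}
  (S1 : {set T1}) (Delta1 : {set T1} -> Prop)
  (D2 : pred (seq T2)) (Pi2 : seq T2 -> T2) (inv2 : T2 -> T2)
  (S2 : {set T2}) (Delta2 : {set T2} -> Prop)
  (Psi : T2 -> T1 -> T1) (eta : T2 -> T2 -> T1)
  (S : {set T1 * T2}) :
  prime p ->
  locality D1 Pi1 inv1 p S1 Delta1 ->
  locality D2 Pi2 inv2 p S2 Delta2 ->
  (forall a, pg_autS D1 Pi1 S1 a -> forall P, Delta1 P -> Delta1 (a @: P)) ->
  isotypical_data D1 Pi1 inv1 D2 Pi2 Psi eta S1 ->
  pg_p_subgroup (ext_D D1 D2 Psi) (ext_Pi Pi1 Pi2 Psi eta)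
    (ext_inv Pi1 inv1 inv2 Psi eta) p S ->
  [set x | (x, pg_one Pi2) \in S] = S1 ->
  [set a.2 | a in S] = S2 ->
  forall (P : {set T1 * T2}) (f : T1 * T2 -> T1 * T2),
    ext_fusion D1 Pi1 inv1 D2 Pi2 inv2 Psi eta Delta1 Delta2 S P f ->
    f @: (P :&: [set (x, pg_one Pi2) | x in S1])
      \subset [set (x, pg_one Pi2) | x in S1].
Proof.
move=> _ _ [[pg2 _ _ _] _] _ _ [pgS _] HS1 _ P f H.
apply/subsetP=> y /imsetP [z /setIP [zP /imsetP [x xS1 zE]] ->].
have [_ fzS Ef] := fus_inv pg2 pgS _ _ H _ zP.
have E2 : (f z).2 = pg_one Pi2 by apply: (proj2 Ef); rewrite zE.
apply/imsetP; exists (f z).1; last by rewrite -E2 -surjective_pairing.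
by rewrite -HS1 inE -E2 -surjective_pairing.
Qed.
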